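(* Let $(\Gamma,c)$ be a real Fuchsian group and $\gamma\in\Gamma$ an admissible element. Then the twisted centralizer $Z_\gamma$ is either trivial, cyclic of order two, infinite cyclic, or infinite dihedral (i.e. $\mathbf{Z}/2\mathbf{Z}\ltimes\mathbf{Z}$).
   Context: $\mathfrak{h}$ is the upper half-plane. A complex conjugation is an anti-holomorphic involution $c$ of $\mathfrak{h}$; for $\gamma\in\mathrm{PSL}_2(\mathbf{R})$, $\gamma^c=c\gamma c$. A real Fuchsian group is a pair $(\Gamma,c)$ with $\Gamma\subseteq\mathrm{PSL}_2(\mathbf{R})$ discrete, $c$ a complex conjugation, $\Gamma^c=\Gamma$, and $\mathfrak{h}^*/\Gamma$ compact, where $\mathfrak{h}^*$ is $\mathfrak{h}$ with the cusps of $\Gamma$ adjoined. $\gamma\in\Gamma$ is admissible if $\gamma^c=\gamma^{-1}$. The twisted centralizer of $\gamma$ is $Z_\gamma=\{\sigma\in\Gamma:\sigma^c\gamma\sigma^{-1}=\gamma\}$. *)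

(* Defs.v *)
(* R : realType, PSL_2(R) modelled by SL_2(R) matrices up to sign. *)
From HB Require Import structures.
From mathcomp Require Import all_boot all_order all_algebra.
From mathcomp Require Import reals.
Set Implicit Arguments. Unset Strict Implicit. Unset Printing Implicit Defensive.
Import Order.TTheory GRing.Theory Num.Theory.
Local Open Scope ring_scope.

Section Fuchsian.
Variable R : realType.
Notation Mat := 'M[R]_2.

Definition ea (g : Mat) := g ord0 ord0.
Definition eb (g : Mat) := g ord0 ord_max.
Definition ec (g : Mat) := g ord_max ord0.
Definition ed (g : Mat) := g ord_max ord_max.

(* equality in PSL_2(R) / PGL_2(R) of two matrix lifts : equal up to sign *)
Definition pequiv (g h : Mat) : Prop := g = h \/ g = - h.

(* G is the full preimage in SL_2(R) of a subgroup Gamma of PSL_2(R) *)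
Definition psl_subgroup (G : Mat -> Prop) : Prop :=
  [/\ (forall g, G g -> \det g = 1), G 1%:M,
      (forall g h, G g -> G h -> G (g *m h)),
      (forall g, G g -> G (invmx g)) & (forall g, G g -> G (- g))].

(* discreteness: every element of Gamma is isolated in PSL_2(R)
   (topology of PSL_2(R) = quotient of the matrix-entry topology of SL_2(R)) *)
Definition psl_discrete (G : Mat -> Prop) : Prop :=
  forall g, G g -> exists2 e : R, 0 < e &
    forall h, G h -> (forall i j, `|h i j - g i j| < e) -> h = g.

(* points of the upper half plane (Hp x y = x + i y, with 0 < y) and of the
   boundary P^1(R) = R u {oo} *)
Inductive pt := Hp of R & R | Bd of R | Inf.

Definition act (g : Mat) (p : pt) : pt :=
  let a := ea g in let b := eb g in let c := ec g in let d := ed g in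
  match p with
  | Hp x y =>
      let den := (c * x + d) ^+ 2 + (c * y) ^+ 2 in
      Hp ((a * c * (x ^+ 2 + y ^+ 2) + (a * d + b * c) * x + b * d) / den)
         ((a * d - b * c) * y / den)
  | Bd x => if c * x + d == 0 then Inf else Bd ((a * x + b) / (c * x + d))
  | Inf => if c == 0 then Inf else Bd (a / c)
  end.

Definition parabolic (g : Mat) : Prop :=
  ~ pequiv g 1%:M /\ `|\tr g| = 2.

Definition cusp (G : Mat -> Prop) (p : pt) : Prop :=
  match p with
  | Hp _ _ => False
  | _ => exists2 g, G g & parabolic g /\ act g p = p
  end.

Definition in_hstar (G : Mat -> Prop) (p : pt) : Prop :=
  match p with
  | Hp _ y => 0 < y
  | _ => cusp G p
  end.

(* U contains a basic neighbourhood of p in h^star (Shimura's topology):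
   euclidean discs for points of h, {s} u (open horodisc tangent at s) for a
   cusp s in R, and {oo} u {Im z > r} for the cusp oo *)
Definition hnbhd (p : pt) (U : pt -> Prop) : Prop :=
  match p with
  | Hp x y => exists2 r : R, 0 < r & forall x' y', 0 < y' ->
        (x' - x) ^+ 2 + (y' - y) ^+ 2 < r ^+ 2 -> U (Hp x' y')
  | Bd s => exists2 r : R, 0 < r & U (Bd s) /\ forall x' y', 0 < y' ->
        (x' - s) ^+ 2 + (y' - r) ^+ 2 < r ^+ 2 -> U (Hp x' y')
  | Inf => exists r : R, U Inf /\ forall x' y', r < y' -> U (Hp x' y')
  end.

Definition hstar_open (G : Mat -> Prop) (U : pt -> Prop) : Prop :=
  (forall p, U p -> in_hstar G p) /\ (forall p, U p -> hnbhd p U).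

(* h^star/Gamma is compact (quotient topology: open sets of h^star/Gamma are the
   images of the Gamma-invariant open subsets of h^star) *)
Definition hstar_quotient_compact (G : Mat -> Prop) : Prop :=
  forall (I : Type) (U : I -> pt -> Prop),
    (forall i, hstar_open G (U i)) ->
    (forall i g p, G g -> in_hstar G p -> (U i p <-> U i (act g p))) ->
    (forall p, in_hstar G p -> exists i, U i p) ->
    exists (n : nat) (f : 'I_n -> I), forall p, in_hstar G p ->
      exists k, U (f k) p.

(* complex conjugation: an anti-holomorphic involution of h; such maps are
   z |-> (a conj(z) + b)/(c conj(z) + d) with det [[a b][c d]] = -1, and being an
   involution means C^2 acts trivially, i.e. C^2 is scalar *)
Definition complex_conjugation (C : Mat) : Prop :=
  \det C = -1 /\ exists l : R, C *m C = l%:M.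

Definition cconj (C g : Mat) : Mat := C *m g *m C.

Definition real_fuchsian (G : Mat -> Prop) (C : Mat) : Prop :=
  [/\ psl_subgroup G, psl_discrete G, complex_conjugation C,
      (forall g, G g <-> G (cconj C g)) & hstar_quotient_compact G].

Definition admissible (G : Mat -> Prop) (C gamma : Mat) : Prop :=
  G gamma /\ pequiv (cconj C gamma) (invmx gamma).

(* preimage in SL_2(R) of the twisted centralizer Z_gamma *)
Definition twisted_centralizer (G : Mat -> Prop) (C gamma : Mat) (s : Mat) : Prop :=
  G s /\ pequiv (cconj C s *m gamma *m invmx s) gamma.

(* the subgroup Z (given by its preimage in SL_2(R)) of PSL_2(R) is isomorphic
   to the group (T, mul) *)
Definition psl_iso (T : Type) (mul : T -> T -> T) (Z : Mat -> Prop) : Prop :=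
  exists phi : T -> Mat,
    [/\ (forall t, Z (phi t)),
        (forall s t, pequiv (phi (mul s t)) (phi s *m phi t)),
        (forall s t, pequiv (phi s) (phi t) -> s = t) &
        (forall z, Z z -> exists t, pequiv (phi t) z)].

End Fuchsian.

Definition triv_mul (_ _ : unit) : unit := tt.
Definition z2_mul (a b : bool) : bool := addb a b.
Definition zz_mul (m n : int) : int := (m + n)%R.
(* Z/2Z |x Z : pairs (a, m), (a, m)(b, n) = (a + b, m + (-1)^a n) *)
Definition dinf_mul (x y : bool * int) : bool * int :=
  (addb x.1 y.1, (x.2 + (if x.1 then - y.2 else y.2))%R).

(* Main.v *)
Require Import Defs.
From HB Require Import structures.
From mathcomp Require Import all_boot all_order all_algebra.
From mathcomp Require Import reals.
From mathcomp Require Import ring lra.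
From mathcomp Require Import classical_sets.
From Stdlib Require Import Classical.
Set Implicit Arguments. Unset Strict Implicit. Unset Printing Implicit Defensive.
Import Order.TTheory GRing.Theory Num.Theory.
Local Open Scope ring_scope.

Lemma ord2P (i : 'I_2) : i = ord0 \/ i = ord_max.
Proof. case: i => [[|[|//]] Hi]; [left|right]; exact/val_inj. Qed.
Lemma liftE : lift ord0 (ord0 : 'I_1) = ord_max :> 'I_2.
Proof. exact/val_inj. Qed.
Lemma liftE2 : lift ord_max (ord0 : 'I_1) = ord0 :> 'I_2.
Proof. exact/val_inj. Qed.

Section E.
Variable R : realType.
Notation Mat := 'M[R]_2.
Implicit Types A B : Mat.

Lemma mx2_eq A B : ea A = ea B -> eb A = eb B -> ec A = ec B -> ed A = ed B -> A = B.
Proof.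
rewrite /ea /eb /ec /ed => h1 h2 h3 h4; apply/matrixP => i j.
by case: (ord2P i) => ->; case: (ord2P j) => ->.
Qed.

Lemma eaM A B : ea (A *m B) = ea A * ea B + eb A * ec B.
Proof. by rewrite /ea /eb /ec mxE !big_ord_recl big_ord0 addr0 liftE. Qed.
Lemma ebM A B : eb (A *m B) = ea A * eb B + eb A * ed B.
Proof. by rewrite /ea /eb /ed mxE !big_ord_recl big_ord0 addr0 liftE. Qed.
Lemma ecM A B : ec (A *m B) = ec A * ea B + ed A * ec B.
Proof. by rewrite /ea /ec /ed mxE !big_ord_recl big_ord0 addr0 liftE. Qed.
Lemma edM A B : ed (A *m B) = ec A * eb B + ed A * ed B.
Proof. by rewrite /eb /ec /ed mxE !big_ord_recl big_ord0 addr0 liftE. Qed.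
Lemma eaN A : ea (- A) = - ea A. Proof. by rewrite /ea mxE. Qed.
Lemma ebN A : eb (- A) = - eb A. Proof. by rewrite /eb mxE. Qed.
Lemma ecN A : ec (- A) = - ec A. Proof. by rewrite /ec mxE. Qed.
Lemma edN A : ed (- A) = - ed A. Proof. by rewrite /ed mxE. Qed.
Lemma eaS (l : R) : ea (l%:M : Mat) = l. Proof. by rewrite /ea mxE. Qed.
Lemma ebS (l : R) : eb (l%:M : Mat) = 0. Proof. by rewrite /eb mxE. Qed.
Lemma ecS (l : R) : ec (l%:M : Mat) = 0. Proof. by rewrite /ec mxE. Qed.
Lemma edS (l : R) : ed (l%:M : Mat) = l. Proof. by rewrite /ed mxE. Qed.
Lemma ea1 : ea (1%:M : Mat) = 1. Proof. exact: eaS. Qed.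
Lemma eb1 : eb (1%:M : Mat) = 0. Proof. exact: ebS. Qed.
Lemma ec1 : ec (1%:M : Mat) = 0. Proof. exact: ecS. Qed.
Lemma ed1 : ed (1%:M : Mat) = 1. Proof. exact: edS. Qed.

Lemma det2 A : \det A = ea A * ed A - eb A * ec A.
Proof.
rewrite (expand_det_row _ ord0) !big_ord_recl big_ord0 addr0 /cofactor.
rewrite !det_mx11 /= !mxE /ea /eb /ec /ed liftE liftE2 expr0 expr1 mul1r mulN1r.
by rewrite mulrN.
Qed.

Definition mk2 (a b c d : R) : Mat :=
  \matrix_(i, j) if i == ord0 then (if j == ord0 then a else b)
                 else (if j == ord0 then c else d).
Lemma ea_mk a b c d : ea (mk2 a b c d) = a. Proof. by rewrite /ea mxE. Qed.
Lemma eb_mk a b c d : eb (mk2 a b c d) = b. Proof. by rewrite /eb mxE. Qed.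
Lemma ec_mk a b c d : ec (mk2 a b c d) = c. Proof. by rewrite /ec mxE. Qed.
Lemma ed_mk a b c d : ed (mk2 a b c d) = d. Proof. by rewrite /ed mxE. Qed.

Definition entE := (eaM, ebM, ecM, edM, eaN, ebN, ecN, edN, eaS, ebS, ecS, edS,
  ea_mk, eb_mk, ec_mk, ed_mk).

Lemma inv_of A B : A *m B = 1%:M -> invmx A = B.
Proof.
move=> AB; have [uA _] := mulmx1_unit AB.
by rewrite -[RHS](mulKmx uA) AB mulmx1.
Qed.

Lemma invol2 X (l : R) : \det X = -1 -> X *m X = l%:M ->
  ed X = - ea X /\ ea X ^+ 2 + eb X * ec X = 1.
Proof.
rewrite det2 => hd hX.
have h1 := congr1 (@ea _) hX; have h2 := congr1 (@eb _) hX.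
have h3 := congr1 (@ec _) hX; have h4 := congr1 (@ed _) hX.
rewrite !entE in h1 h2 h3 h4; clear hX.
move: (ea X) (eb X) (ec X) (ed X) hd h1 h2 h3 h4 => a b c d hd h1 h2 h3 h4.
have hs : a + d = 0.
  apply/eqP; apply/negP => /negP hs.
  have hb : b = 0.
    have e : b * (a + d) = 0 by nra.
    by apply/eqP; move/eqP: e; rewrite mulf_eq0 (negbTE hs) orbF.
  have hc : c = 0.
    have e : c * (a + d) = 0 by nra.
    by apply/eqP; move/eqP: e; rewrite mulf_eq0 (negbTE hs) orbF.
  subst b c.
  have e : (a - d) * (a + d) = 0 by nra.
  move/eqP: e; rewrite mulf_eq0 (negbTE hs) orbF subr_eq0 => /eqP ead.
  subst a; nra.
have -> : d = - a by lra.
split => //; nra.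
Qed.

End E.

Lemma diagz (R : realType) (M : 'M[R]_2) : ed M = - ea M -> ea M ^+ 2 + eb M * ec M = 1 ->
  exists P : 'M[R]_2, \det P = 1 /\ M *m P = P *m mk2 1 0 0 (-1).
Proof.
move=> hd hp.
have [q0|q0] := eqVneq (eb M) 0.
  have : (ea M - 1) * (ea M + 1) = 0 by rewrite q0 mul0r addr0 in hp; lra.
  move/eqP; rewrite mulf_eq0 => /orP[|] /eqP e.
    have p1 : ea M = 1 by lra.
    exists (mk2 1 0 (ec M / 2) 1); split.
      by rewrite det2 !entE; ring.
    by apply: mx2_eq; rewrite !entE ?hd ?p1 ?q0; field.
  have p1 : ea M = -1 by lra.
  exists (mk2 0 2 (-1/2) (- ec M)); split.
    by rewrite det2 !entE; field.
  by apply: mx2_eq; rewrite !entE ?hd ?p1 ?q0; field.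
have hr : ec M = (1 - ea M ^+ 2) / eb M.
  by apply: (mulIf q0); rewrite mulfVK // -hp; ring.
exists (mk2 (-1/2) (eb M) (-(1 - ea M) / (2 * eb M)) (-1 - ea M)); split.
  by rewrite det2 !entE; field.
by apply: mx2_eq; rewrite !entE ?hd ?hr; field.
Qed.

Section RG.
Variable R : realType.
Variable A : R -> Prop.
Hypothesis A1 : A 1.
Hypothesis AM : forall a b, A a -> A b -> A (a * b).
Hypothesis AV : forall a, A a -> A a^-1.
Hypothesis AN : forall a, A a -> A (- a).
Hypothesis A0 : forall a, A a -> a != 0.
Hypothesis Ad : exists2 d : R, 0 < d & forall a, A a -> `|a - 1| < d -> a = 1.

Lemma A_abs a : A a -> A `|a|.
Proof. by move=> Aa; case: (ler0P a) => _; [apply: AN|]. Qed.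

Lemma A_pow t n : A t -> A (t ^+ n).
Proof. by move=> At; elim: n => [|n IH]; rewrite ?expr0 // exprS; apply: AM. Qed.

Lemma bern (t : R) n : 1 <= t -> 1 + n%:R * (t - 1) <= t ^+ n.
Proof.
move=> t1; elim: n => [|n IH]; first by rewrite mul0r addr0 expr0.
rewrite exprS -natr1.
have h : 1 <= t ^+ n by rewrite exprn_ege1.
nra.
Qed.

Lemma A_min : (exists a, A a /\ 1 < a) ->
  exists t, [/\ A t, 1 < t & forall a, A a -> 1 < a -> t <= a].
Proof.
case=> a1 [Aa1 a1g]; case: Ad => d d0 hd.
pose S : set R := (fun x => A x /\ 1 < x).
have lbS : lbound S 1 by move=> x [_ /ltW].
have hS : has_inf S by split; [exists a1 | exists 1].
have m1 : 1 <= inf S by apply: lb_le_inf => //; exists a1.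
have [s [As s1] slt] := inf_adherent d0 hS.
exists s; split => // x Ax x1; rewrite leNgt; apply/negP => xs.
have x0 : 0 < x by lra.
have Ay : A (s / x) by apply: AM => //; apply: AV.
have y1 : 1 < s / x by rewrite ltr_pdivlMr // mul1r.
have xm : inf S <= x by apply: ge_inf; [exists 1 | split].
have : `|s / x - 1| < d.
  rewrite ger0_norm; last by lra.
  have -> : s / x - 1 = (s - x) / x by field; lra.
  rewrite ltr_pdivrMr //; nra.
by move/(hd _ Ay) => e; rewrite e ltxx in y1.
Qed.

Lemma A_nat t : A t -> 1 < t -> (forall a, A a -> 1 < a -> t <= a) ->
  forall b, A b -> 1 <= b -> exists n : nat, b = t ^+ n.
Proof.
move=> At t1 tmin b Ab b1.
have t0 : 0 < t by lra.
pose N := Num.bound (b / (t - 1)).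
have hN : b / (t - 1) < N%:R by apply: archi_boundP; apply: divr_ge0; lra.
have ex : exists n, t ^+ n <= b by exists 0%N; rewrite expr0.
have bd : forall n, t ^+ n <= b -> (n <= N)%N.
  move=> n hn; rewrite leqNgt; apply/negP => nN.
  have := @bern t n (ltW t1).
  have : N%:R <= n%:R :> R by rewrite ler_nat ltnW.
  rewrite ltr_pdivrMr in hN; last by lra.
  nra.
case: (@ex_maxnP (fun n => t ^+ n <= b) N ex bd) => n hn hmax.
exists n.
have tn0 : 0 < t ^+ n by apply: exprn_gt0.
have Ac : A (b / t ^+ n) by apply: AM => //; apply/AV/A_pow.
have c1 : 1 <= b / t ^+ n by rewrite ler_pdivlMr // mul1r.
have ct : b / t ^+ n < t.
  rewrite ltr_pdivrMr // -(exprS t n) ltNge; apply/negP => h.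
  by have := hmax _ h; rewrite ltnn.
case: (ltrgtP 1 (b / t ^+ n)) => [h|h|h]; first by have := tmin _ Ac h; lra.
  lra.
by rewrite -[b](divfK (lt0r_neq0 tn0)) -h mul1r.
Qed.

Lemma A_int t : A t -> 1 < t -> (forall a, A a -> 1 < a -> t <= a) ->
  forall b, A b -> 0 < b -> exists m : int, b = t ^ m.
Proof.
move=> At t1 tmin b Ab b0.
case: (lerP 1 b) => b1.
  by have [n ->] := A_nat At t1 tmin Ab b1; exists n.
have [n hn] : exists n : nat, b^-1 = t ^+ n.
  apply: (A_nat At t1 tmin (AV Ab)); rewrite ltW // invf_gt1 //.
by exists (- n%:Z); rewrite -invr_expz (_ : t ^ n%:Z = t ^+ n) // -hn invrK.
Qed.

End RG.

Section DA.
Variable R : realType.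
Notation Mat := 'M[R]_2.
Definition dg (a : R) : Mat := mk2 a 0 0 a^-1.
Definition ad (b : R) : Mat := mk2 0 b (- b^-1) 0.

Lemma dgM a b : a != 0 -> b != 0 -> dg a *m dg b = dg (a * b).
Proof. by move=> a0 b0; apply: mx2_eq; rewrite !entE; field; rewrite ?a0 ?b0. Qed.
Lemma dg1 : dg 1 = 1%:M.
Proof. by apply: mx2_eq; rewrite !entE ?invr1. Qed.
Lemma dgN a : - dg a = dg (- a).
Proof. by apply: mx2_eq; rewrite !entE ?oppr0 ?invrN. Qed.
Lemma dgV a : a != 0 -> invmx (dg a) = dg a^-1.
Proof. by move=> a0; apply: inv_of; rewrite dgM ?invr_eq0 // mulfV // dg1. Qed.
Lemma dg_det a : \det (dg a) = 1 -> a != 0.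
Proof. by rewrite det2 !entE; apply: contra_eqN => /eqP ->; rewrite invr0 !mul0r subr0 eq_sym oner_eq0. Qed.
Lemma adN b : - ad b = ad (- b).
Proof. by apply: mx2_eq; rewrite !entE ?oppr0 ?invrN ?opprK. Qed.
Lemma ad_dg b a : a != 0 -> b != 0 -> ad b *m dg a = ad (b / a).
Proof. by move=> a0 b0; apply: mx2_eq; rewrite !entE; field; rewrite ?a0 ?b0. Qed.
Lemma dg_ad a b : a != 0 -> b != 0 -> dg a *m ad b = ad (a * b).
Proof. by move=> a0 b0; apply: mx2_eq; rewrite !entE; field; rewrite ?a0 ?b0. Qed.
Lemma adM b c : b != 0 -> c != 0 -> ad b *m ad c = dg (- (b / c)).
Proof. by move=> b0 c0; apply: mx2_eq; rewrite !entE; field; rewrite ?b0 ?c0. Qed.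
Lemma adV b : b != 0 -> invmx (ad b) = ad (- b).
Proof.
move=> b0; apply: inv_of; rewrite adM ?oppr_eq0 //.
by rewrite (_ : - (b / - b) = 1) ?dg1 //; field.
Qed.
Lemma dg_ad_neq a b : a != 0 -> ~ (dg a = ad b \/ dg a = - ad b).
Proof.
move=> a0 [] /(congr1 (@ea _)); rewrite !entE ?oppr0 => e; by rewrite e eqxx in a0.
Qed.

Lemma form_dg (s : Mat) : \det s = 1 -> eb s = 0 -> ec s = 0 -> s = dg (ea s) /\ ea s != 0.
Proof.
rewrite det2 => hd hb hc; rewrite hb hc mul0r subr0 in hd.
have a0 : ea s != 0 by apply: contra_eq_neq hd => ->; rewrite mul0r eq_sym oner_neq0.
split => //; apply: mx2_eq; rewrite !entE //.
by apply: (mulfI a0); rewrite hd mulfV.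
Qed.
Lemma form_ad (s : Mat) : \det s = 1 -> ea s = 0 -> ed s = 0 -> s = ad (eb s) /\ eb s != 0.
Proof.
rewrite det2 => hd ha hd'; rewrite ha mul0r sub0r in hd.
have b0 : eb s != 0 by apply: contra_eq_neq hd => ->; rewrite mul0r oppr0 eq_sym oner_neq0.
split => //; apply: mx2_eq; rewrite !entE //.
by apply: (mulfI b0); rewrite mulrN mulfV // -hd opprK.
Qed.
End DA.

Section Core.
Variable R : realType.
Notation Mat := 'M[R]_2.
Variable Z : Mat -> Prop.
Hypothesis Z1 : Z 1%:M.
Hypothesis ZM : forall s t, Z s -> Z t -> Z (s *m t).
Hypothesis ZV : forall s, Z s -> Z (invmx s).
Hypothesis ZN : forall s, Z s -> Z (- s).
Hypothesis Zdet : forall s, Z s -> \det s = 1.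
Hypothesis Zform : forall s, Z s -> (eb s = 0 /\ ec s = 0) \/ (ea s = 0 /\ ed s = 0).
Hypothesis Zdisc : exists2 e : R, 0 < e &
  forall a, Z (dg a) -> `|a - 1| < e -> `|a^-1 - 1| < e -> a = 1.

Let A a := Z (dg a).
Let A0 a : A a -> a != 0. Proof. by move=> Aa; apply: dg_det; apply: Zdet. Qed.
Let A1 : A 1. Proof. by rewrite /A dg1. Qed.
Let AM a b : A a -> A b -> A (a * b).
Proof. by move=> Aa Ab; rewrite /A -dgM ?A0 //; apply: ZM. Qed.
Let AV a : A a -> A a^-1.
Proof. by move=> Aa; rewrite /A -dgV ?A0 //; apply: ZV. Qed.
Let AN a : A a -> A (- a).
Proof. by move=> Aa; rewrite /A -dgN; apply: ZN. Qed.
Let Ad : exists2 d : R, 0 < d & forall a, A a -> `|a - 1| < d -> a = 1.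
Proof.
case: Zdisc => e e0 he; exists (Num.min (1/2) (e/2)).
  by rewrite lt_min; apply/andP; split; lra.
move=> a Aa; rewrite lt_min => /andP[h1 h2]; apply: he => //.
  move: h2; rewrite !ltr_norml => /andP[? ?]; apply/andP; split; lra.
move: h1 h2; rewrite !ltr_norml => /andP[h1 h1'] /andP[h2 h2'].
have a0 : 0 < a by lra.
have -> : a^-1 - 1 = (1 - a) / a by field; rewrite gt_eqF.
rewrite ltr_pdivrMr // ltr_pdivlMr //; apply/andP; split; nra.
Qed.

Let B b := Z (ad b).

Let Zclass s : Z s -> (exists a, A a /\ s = dg a) \/ (exists b, B b /\ b != 0 /\ s = ad b).
Proof.
move=> Zs; have hd := Zdet Zs.
case: (Zform Zs) => [[hb hc]|[ha hd']].
  by have [e _] := form_dg hd hb hc; left; exists (ea s); rewrite /A -e.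
by have [e b0] := form_ad hd ha hd'; right; exists (eb s); rewrite /B -e.
Qed.

Let BB b c : B b -> B c -> c != 0 -> b != 0 -> A (b / c).
Proof.
move=> Bb Bc c0 b0; rewrite /A.
have := ZM Bb (ZV Bc); rewrite adV // adM ?oppr_eq0 //.
by rewrite invrN mulrN opprK.
Qed.

Let pm (x y : R) := x = y \/ x = - y.


Let Atriv : ~ (exists a, A a /\ 1 < a) -> forall a, A a -> pm a 1.
Proof.
move=> nt a Aa; have Ab := A_abs AN Aa; have a0 := A0 Aa.
have b0 : 0 < `|a| by rewrite normr_gt0.
have b1 : `|a| = 1.
  case: (ltrgtP `|a| 1) => // h.
    exfalso; apply: nt; exists (`|a|^-1); split; first exact: AV.
    by rewrite invf_gt1.
  by exfalso; apply: nt; exists `|a|.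
case: (ler0P a) => ha.
  by rewrite ler0_norm // in b1; right; rewrite -b1 opprK.
by rewrite gtr0_norm // in b1; left.
Qed.

Let Agen t : A t -> 1 < t -> (forall a, A a -> 1 < a -> t <= a) ->
  forall a, A a -> exists m : int, pm a (t ^ m).
Proof.
move=> At t1 tmin a Aa; have Ab := A_abs AN Aa; have a0 := A0 Aa.
have b0 : 0 < `|a| by rewrite normr_gt0.
have [m hm] := A_int A1 AM AV At t1 tmin Ab b0.
exists m; case: (ler0P a) => ha.
  by rewrite ler0_norm // in hm; right; rewrite -hm opprK.
by rewrite gtr0_norm // in hm; left.
Qed.

Let Apowz t (m : int) : A t -> A (t ^ m).
Proof.
move=> At; case: m => n; first exact: A_pow.
by rewrite NegzE -invr_expz; apply: AV; apply: A_pow.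
Qed.

Let B0 b : B b -> b != 0.
Proof.
move=> Bb; have := Zdet Bb; rewrite det2 !entE mul0r sub0r mulrN opprK.
by apply: contra_eq_neq => ->; rewrite mul0r eq_sym oner_neq0.
Qed.

Let psym (g h : Mat) : pequiv g h -> pequiv h g.
Proof. by case=> ->; [left|right; rewrite opprK]. Qed.

Let tinj (t : R) m n : 1 < t -> pm (t ^ m) (t ^ n) -> m = n.
Proof.
move=> t1 [e|e]; first by apply: (ieexprIz _ _ e); [lra | rewrite gt_eqF].
have h1 : 0 < t ^ m by apply: exprz_gt0; lra.
have h2 : 0 < t ^ n by apply: exprz_gt0; lra.
by move: h1; rewrite e oppr_gt0 ltNge (ltW h2).
Qed.

Let case1 : ~ (exists a, A a /\ 1 < a) -> ~ (exists b, B b) -> psl_iso triv_mul Z.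
Proof.
move=> hnt hnb; exists (fun _ => 1%:M); split => //.
- by move=> s t; left; rewrite mul1mx.
- by case; case.
move=> z Zz; exists tt.
case: (Zclass Zz) => [[a [Aa ->]]|[b [Bb _]]]; last by exfalso; apply: hnb; exists b.
case: (Atriv hnt Aa) => ->; first by left; rewrite dg1.
by right; rewrite dgN opprK dg1.
Qed.

Let case2 b0 : ~ (exists a, A a /\ 1 < a) -> B b0 -> psl_iso z2_mul Z.
Proof.
move=> hnt Bb0; have b00 := B0 Bb0.
exists (fun x : bool => if x then ad b0 else 1%:M); split.
- by case.
- case; case => /=; [right|left|left|left]; rewrite ?mul1mx ?mulmx1 //.
  by rewrite adM // divff // dgN opprK dg1.
- have H : ~ pequiv 1%:M (ad b0) by rewrite -dg1; apply: dg_ad_neq; rewrite oner_neq0.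
  case; case => //= h; exfalso; apply: H => //; exact: psym.
move=> z Zz; case: (Zclass Zz) => [[a [Aa ->]]|[b [Bb [b1 ->]]]].
  exists false; case: (Atriv hnt Aa) => ->; first by left; rewrite dg1.
  by right; rewrite dgN opprK dg1.
exists true; case: (Atriv hnt (BB Bb Bb0 b00 b1)) => e.
  by left; rewrite -[b](divfK b00) e mul1r.
by right; rewrite adN -[b](divfK b00) e mulNr mul1r opprK.
Qed.

Let tpos (t : R) (m : int) : 1 < t -> t ^ m != 0.
Proof. by move=> t1; rewrite gt_eqF // exprz_gt0 //; lra. Qed.

Let tunit (t : R) : 1 < t -> t \is a GRing.unit.
Proof. by move=> t1; rewrite unitfE gt_eqF //; lra. Qed.

Let case3 t : A t -> 1 < t -> (forall a, A a -> 1 < a -> t <= a) ->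
  ~ (exists b, B b) -> psl_iso zz_mul Z.
Proof.
move=> At t1 tmin hnb; exists (fun m => dg (t ^ m)); split.
- by move=> m; apply: Apowz.
- by move=> m n; left; rewrite dgM ?tpos // /zz_mul exprzDr ?tunit.
- move=> m n [] /(congr1 (@ea _)); rewrite !entE => e; apply: (tinj t1); [left|right] => //.
move=> z Zz; case: (Zclass Zz) => [[a [Aa ->]]|[b [Bb _]]]; last by exfalso; apply: hnb; exists b.
have [m [e|e]] := Agen At t1 tmin Aa; exists m; first by left; rewrite e.
by right; rewrite dgN e opprK.
Qed.

Let case4 t b0 : A t -> 1 < t -> (forall a, A a -> 1 < a -> t <= a) ->
  B b0 -> psl_iso dinf_mul Z.
Proof.
move=> At t1 tmin Bb0; have b00 := B0 Bb0.
have tb m : t ^ m * b0 != 0 by rewrite mulf_neq0 ?tpos.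
exists (fun x : bool * int => if x.1 then ad (t ^ x.2 * b0) else dg (t ^ x.2)); split.
- case=> [[] m] /=; last by apply: Apowz.
  by rewrite -dg_ad ?tpos //; apply: ZM => //; apply: Apowz.
- case=> [[] m] [[] n] /=.
  + right; rewrite adM ?tb // dgN opprK; congr dg.
    rewrite exprzDr ?tunit // -invr_expz; field.
    by rewrite b00 tpos.
  + left; rewrite ad_dg ?tb ?tpos // exprzDr ?tunit // -invr_expz; congr ad.
    by rewrite mulrAC.
  + by left; rewrite dg_ad ?tb ?tpos // exprzDr ?tunit // mulrA.
  + by left; rewrite dgM ?tpos // exprzDr ?tunit.
- case=> [[] m] [[] n] /= h.
  + congr (_, _); move: h => [] /(congr1 (@eb _)); rewrite !entE => e; apply: (tinj t1).
      by left; apply: (mulIf b00).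
    by right; apply: (mulIf b00); rewrite e mulNr.
  + by exfalso; apply: (dg_ad_neq (tpos n t1)); exact: (psym h).
  + by exfalso; apply: (dg_ad_neq (tpos m t1)); exact: h.
  + congr (_, _); move: h => [] /(congr1 (@ea _)); rewrite !entE => e; apply: (tinj t1); [left|right] => //.
move=> z Zz; case: (Zclass Zz) => [[a [Aa ->]]|[b [Bb [b1 ->]]]].
  have [m [e|e]] := Agen At t1 tmin Aa; exists (false, m); first by left; rewrite e.
  by right; rewrite /= dgN e opprK.
have [m [e|e]] := Agen At t1 tmin (BB Bb Bb0 b00 b1); exists (true, m) => /=.
  by left; rewrite -e divfK.
by right; rewrite adN; congr ad; rewrite -[b](divfK b00) e mulNr opprK.
Qed.

Lemma core_iso : [\/ psl_iso triv_mul Z, psl_iso z2_mul Z, psl_iso zz_mul Z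
    | psl_iso dinf_mul Z].
Proof.
case: (classic (exists a, A a /\ 1 < a)) => [ht|hnt];
  case: (classic (exists b, B b)) => [[b0 Bb0]|hnb].
- have [t [At t1 tmin]] := A_min AM AV Ad ht.
  by apply: Or44; apply: (case4 At t1 tmin Bb0).
- have [t [At t1 tmin]] := A_min AM AV Ad ht.
  by apply: Or43; apply: (case3 At t1 tmin hnb).
- by apply: Or42; apply: (case2 hnt Bb0).
- by apply: Or41; apply: case1.
Qed.

End Core.

Section Glue.
Variable R : realType.
Notation Mat := 'M[R]_2.

Lemma sq1 (X : Mat) : ed X = - ea X -> ea X ^+ 2 + eb X * ec X = 1 -> X *m X = 1%:M.
Proof.
move=> hd hp; apply: mx2_eq; rewrite !entE ?hd; [rewrite -hp; ring | ring | ring | rewrite -hp; ring].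
Qed.

Lemma tw_iff (C g s X : Mat) : C *m C = 1%:M -> s \in unitmx ->
  (cconj C s *m g *m invmx s = X <-> s *m (C *m g) = C *m X *m s).
Proof.
move=> hC us; rewrite /cconj; split=> h.
  rewrite -h -[C *m (_ *m invmx s) *m s]mulmxA mulmxKV //.
  by rewrite !mulmxA hC mul1mx.
have e : C *m s *m C *m g = X *m s.
  by rewrite -!mulmxA (mulmxA s) -(mulmxA s) h !mulmxA hC mul1mx.
by rewrite e mulmxK.
Qed.

Lemma iso_conj T (mul : T -> T -> T) (Z : Mat -> Prop) (P : Mat) : P \in unitmx ->
  psl_iso mul (fun t => Z (P *m t *m invmx P)) -> psl_iso mul Z.
Proof.
move=> uP [phi [h1 h2 h3 h4]].
exists (fun t => P *m phi t *m invmx P); split.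
- exact: h1.
- move=> s t; have := h2 s t; rewrite /pequiv => -[->|->]; [left|right].
    by rewrite -!mulmxA (mulmxA (invmx P)) mulVmx // mul1mx.
  by rewrite mulmxN mulNmx -!mulmxA (mulmxA (invmx P)) mulVmx // mul1mx.
- move=> s t [e|e]; apply: h3; [left|right].
    by move: (congr1 (fun x => invmx P *m x *m P) e) => /=; rewrite !mulmxA !mulVmx // !mul1mx !mulmxKV.
  move: (congr1 (fun x => invmx P *m x *m P) e) => /=.
  by rewrite mulmxN mulNmx !mulmxA !mulVmx // !mul1mx !mulmxKV.
- move=> z Zz.
  have Zz' : Z (P *m (invmx P *m z *m P) *m invmx P).
    by rewrite !mulmxA mulmxV // mul1mx mulmxK.
  have [t ht] := h4 _ Zz'.
  exists t; case: ht => e; [left|right]; rewrite e.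
    by rewrite !mulmxA mulmxV // mul1mx mulmxK.
  by rewrite mulmxN mulNmx !mulmxA mulmxV // mul1mx mulmxK.
Qed.

End Glue.

Section Disc.
Variable R : realType.
Notation Mat := 'M[R]_2.

Lemma eaD (A B : Mat) : ea (A + B) = ea A + ea B. Proof. by rewrite /ea mxE. Qed.
Lemma ebD (A B : Mat) : eb (A + B) = eb A + eb B. Proof. by rewrite /eb mxE. Qed.
Lemma ecD (A B : Mat) : ec (A + B) = ec A + ec B. Proof. by rewrite /ec mxE. Qed.
Lemma edD (A B : Mat) : ed (A + B) = ed A + ed B. Proof. by rewrite /ed mxE. Qed.

Lemma bnd (x1 x2 y1 y2 u v k e : R) : `|x1| <= k -> `|x2| <= k -> `|y1| <= k -> `|y2| <= k ->
  `|u| < e -> `|v| < e ->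
  `|(x1 * u + x2 * 0) * y1 + (x1 * 0 + x2 * v) * y2| <= 2 * (k * k * e).
Proof.
move=> h1 h2 h3 h4 h5 h6; rewrite !mulr0 addr0 add0r.
apply: le_trans (ler_normD _ _) _; rewrite !normrM.
have b1 : `|x1| * `|u| * `|y1| <= k * e * k.
  by apply: ler_pM => //; rewrite ?mulr_ge0 //; apply: ler_pM => //; apply: ltW.
have b2 : `|x2| * `|v| * `|y2| <= k * e * k.
  by apply: ler_pM => //; rewrite ?mulr_ge0 //; apply: ler_pM => //; apply: ltW.
lra.
Qed.

Lemma disc_conj (G : Mat -> Prop) (P : Mat) : psl_discrete G -> G 1%:M -> P \in unitmx ->
  exists2 e : R, 0 < e & forall a, G (P *m dg a *m invmx P) ->
    `|a - 1| < e -> `|a^-1 - 1| < e -> a = 1.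
Proof.
move=> Gd G1 uP; have [e0 e00 he] := Gd _ G1.
set Q := invmx P.
pose K := 1 + (`|ea P| + `|eb P| + `|ec P| + `|ed P|) + (`|ea Q| + `|eb Q| + `|ec Q| + `|ed Q|).
have K1 : 1 <= K.
  rewrite /K -addrA lerDl; apply: addr_ge0; rewrite ?addr_ge0 //.
have bk : [/\ `|ea P| <= K, `|eb P| <= K, `|ec P| <= K & `|ed P| <= K] /\
          [/\ `|ea Q| <= K, `|eb Q| <= K, `|ec Q| <= K & `|ed Q| <= K].
  have := normr_ge0 (ea P); have := normr_ge0 (eb P); have := normr_ge0 (ec P); have := normr_ge0 (ed P).
  have := normr_ge0 (ea Q); have := normr_ge0 (eb Q); have := normr_ge0 (ec Q); have := normr_ge0 (ed Q).
  rewrite /K; move=> *; split; split; lra.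
case: bk => [[p1 p2 p3 p4] [q1 q2 q3 q4]].
have Kp : 0 < 2 * (K * K) + 1 by nra.
exists (e0 / (2 * (K * K) + 1)); first by rewrite divr_gt0.
move=> a Ga hu hv.
have ee : 2 * (K * K * (e0 / (2 * (K * K) + 1))) < e0.
  have r1 : 2 * (K * K) / (2 * (K * K) + 1) < 1 by rewrite ltr_pdivrMr // mul1r; lra.
  have -> : 2 * (K * K * (e0 / (2 * (K * K) + 1))) = (2 * (K * K) / (2 * (K * K) + 1)) * e0.
    by field; rewrite lt0r_neq0.
  nra.
have hE : dg a - 1%:M = mk2 (a - 1) 0 0 (a^-1 - 1).
  by apply: mx2_eq; rewrite !(eaD, ebD, ecD, edD) !entE ?subrr.
have hh : P *m dg a *m Q - 1%:M = P *m mk2 (a - 1) 0 0 (a^-1 - 1) *m Q.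
  by rewrite -hE mulmxBr mulmxBl mulmx1 mulmxV.
have h1 : P *m dg a *m Q = 1%:M.
  apply: he => // i j.
  have -> : (P *m dg a *m Q) i j - (1%:M : Mat) i j = (P *m dg a *m Q - 1%:M) i j.
    by rewrite !mxE.
  rewrite hh; apply: le_lt_trans ee.
  case: (ord2P i) => ->; case: (ord2P j) => ->.
  - by rewrite -[_ ord0 ord0]/(ea _) !entE; apply: bnd.
  - by rewrite -[_ ord0 ord_max]/(eb _) !entE; apply: bnd.
  - by rewrite -[_ ord_max ord0]/(ec _) !entE; apply: bnd.
  - by rewrite -[_ ord_max ord_max]/(ed _) !entE; apply: bnd.
have : dg a = 1%:M.
  have : invmx P *m (P *m dg a *m Q) *m P = 1%:M by rewrite h1 mulmx1 mulVmx.
  by rewrite !mulmxA mulVmx // mul1mx mulmxKV.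
by move/(congr1 (@ea _)); rewrite !entE.
Qed.
End Disc.

Lemma conj_inj (R : realType) (P X Y : 'M[R]_2) : P \in unitmx ->
  P *m X *m invmx P = P *m Y *m invmx P -> X = Y.
Proof.
move=> uP e; have := congr1 (fun x => invmx P *m x *m P) e => /=.
by rewrite !mulmxA !mulVmx // !mul1mx !mulmxKV.
Qed.

Lemma conj_mul (R : realType) (P X Y : 'M[R]_2) : P \in unitmx ->
  P *m X *m invmx P *m (P *m Y *m invmx P) = P *m (X *m Y) *m invmx P.
Proof.
by move=> uP; rewrite !mulmxA -(mulmxA _ (invmx P)) mulVmx // mulmx1.
Qed.

Theorem lemma3p6 (R : realType) (G : 'M[R]_2 -> Prop) (C gamma : 'M[R]_2) :
  real_fuchsian G C -> admissible G C gamma ->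
  let Z := twisted_centralizer G C gamma in
  [\/ psl_iso triv_mul Z, psl_iso z2_mul Z, psl_iso zz_mul Z
    | psl_iso dinf_mul Z].
Proof.
move=> [[Gdet G1 GM GV GN] Gdisc [Cdet [l Cl]] Gc _] [Gg hg] Z.
have [hCd hCp] := invol2 Cdet Cl; have hC := sq1 hCd hCp.
have gdet := Gdet _ Gg.
have ug : gamma \in unitmx by rewrite unitmxE gdet unitr1.
pose M := C *m gamma.
have Mdet : \det M = -1 by rewrite det_mulmx Cdet gdet mulr1.
have [l' MM] : exists l' : R, M *m M = l'%:M.
  have e0 : M *m M = cconj C gamma *m gamma by rewrite /M /cconj !mulmxA.
  move: hg; rewrite /pequiv => -[e|e]; rewrite e in e0.
    by exists 1; rewrite e0 mulVmx.
  exists (-1); rewrite e0 mulNmx mulVmx //.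
  by apply: mx2_eq; rewrite ?entE ?oppr0.
have [hMd hMp] := invol2 Mdet MM.
have [P [Pdet hP]] := @diagz R M hMd hMp.
have uP : P \in unitmx by rewrite unitmxE Pdet unitr1.
pose D := mk2 (1 : R) 0 0 (-1).
have hM : M = P *m D *m invmx P by rewrite -hP mulmxK.
have Zchar : forall s, Z s <-> G s /\ (s *m M = M *m s \/ s *m M = - (M *m s)).
  move=> s; have Zs_unit : G s -> s \in unitmx.
    by move=> Gs; rewrite unitmxE (Gdet _ Gs) unitr1.
  rewrite /M; split.
    case=> Gs [e|e]; split => //.
      by left; move/(@tw_iff R C gamma s _ hC (Zs_unit Gs)): e => ->.
    by right; move/(@tw_iff R C gamma s _ hC (Zs_unit Gs)): e => ->; rewrite mulmxN mulNmx.
  case=> Gs [e|e]; split => //.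
    by left; apply/(@tw_iff R C gamma s _ hC (Zs_unit Gs)); rewrite e.
  by right; apply/(@tw_iff R C gamma s _ hC (Zs_unit Gs)); rewrite e mulmxN mulNmx.
pose Z' := fun t => Z (P *m t *m invmx P).
have Z'char : forall t, Z' t <-> G (P *m t *m invmx P) /\ (t *m D = D *m t \/ t *m D = - (D *m t)).
  move=> t; rewrite /Z' Zchar hM !conj_mul //.
  split; case=> Gs h; split => //.
    case: h => e; [left|right]; apply: (conj_inj uP) => //.
    by rewrite e mulmxN mulNmx.
  case: h => ->; [left|right] => //.
  by rewrite mulmxN mulNmx.
have Z'det : forall t, Z' t -> \det t = 1.
  move=> t /Z'char [/Gdet + _]; rewrite !det_mulmx det_inv Pdet invr1 mul1r mulr1 //.
have Z'unit : forall t, Z' t -> t \in unitmx.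
  by move=> t /Z'det h; rewrite unitmxE h unitr1.
have core := @core_iso R Z'.
suff : [\/ psl_iso triv_mul Z', psl_iso z2_mul Z', psl_iso zz_mul Z'
    | psl_iso dinf_mul Z'].
  by case=> h; [apply: Or41|apply: Or42|apply: Or43|apply: Or44]; apply: (iso_conj uP).
apply: core.
- by apply/Z'char; rewrite !mulmx1 mulmxV // mul1mx; split; [|left].
- move=> s t /Z'char [Gs hs] /Z'char [Gt ht]; apply/Z'char; split.
    by rewrite -conj_mul //; apply: GM.
  case: hs => es; case: ht => et; [left|right|right|left].
  + by rewrite -mulmxA et !mulmxA es.
  + by rewrite -mulmxA et mulmxN !mulmxA es.
  + by rewrite -mulmxA et !mulmxA es mulNmx.
  + by rewrite -mulmxA et mulmxN !mulmxA es mulNmx opprK.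
- move=> s Zs; have us := Z'unit _ Zs; move/Z'char: Zs => [Gs hs]; apply/Z'char; split.
    have -> : P *m invmx s *m invmx P = invmx (P *m s *m invmx P).
      by apply/esym/inv_of; rewrite conj_mul // mulmxV // mulmx1 mulmxV.
    exact: GV.
  have key : forall X : 'M[R]_2, s *m D = X -> D *m invmx s = invmx s *m X *m invmx s.
    by move=> X <-; rewrite mulKmx // mulmxK.
  case: hs => e; [left|right].
    by rewrite (key _ e) -!mulmxA mulmxV // mulmx1.
  by rewrite (key _ e) mulmxN mulNmx -!mulmxA mulmxV // mulmx1 opprK.
- move=> s /Z'char [Gs hs]; apply/Z'char; split.
    by rewrite mulmxN mulNmx; apply: GN.
  case: hs => e; [left|right]; by rewrite mulNmx mulmxN e ?opprK.
- exact: Z'det.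
- move=> s /Z'char [_ [e|e]].
    left; have := congr1 (@eb _) e; have := congr1 (@ec _) e; rewrite /D !entE => h1 h2.
    split; lra.
  right; have := congr1 (@ea _) e; have := congr1 (@ed _) e; rewrite /D !entE => h1 h2.
  split; lra.
- have [e e0 he] := disc_conj Gdisc G1 uP.
  exists e => // a /Z'char [Ga _]; exact: he.
Qed.
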